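(* Let $\mathcal P$ be a CPOS $2n$-gon and $i$ an index. Suppose the line through $P_i$ and $N(i+\tfrac12)$ meets the line $P_{n+i}P_{n+i+1}$ at a point $P_i'$ belonging to the segment $[P_{n+i},P_{n+i+1}]$. Then $N(i+\tfrac12)$ is the midpoint of the chord $P_iP_i'$, and this chord divides the region bounded by $\mathcal P$ into two regions of equal area.
   Context: A CPOS $2n$-gon ($n\ge2$) is a closed planar polygon $\mathcal P$ with vertices $P_1,\dots,P_{2n}$ (indices mod $2n$) bounding a convex region, with no two adjacent sides parallel, with $P_{i+n+1}-P_{i+n}$ parallel to $P_{i+1}-P_i$ for all $i$, and positively oriented: $[P_{i+1}-P_i,P_{j+1}-P_j]>0$ for $1\le i<j\le n$ ($[\cdot,\cdot]$ = determinant). $M_i=\tfrac12(P_i+P_{i+n})$; the mid-parallel line $m(i+\tfrac12)$ is the line through $M_i$ parallel to $P_{i+1}-P_i$. $A_i^+$ is the area of the polygon $P_iP_{i+1}\cdots P_{i+n}$ and $A_i^-$ the area of the polygon $P_{i+n}P_{i+n+1}\cdots P_{i+2n}$. $N(i+\tfrac12)$ is the unique point of $m(i+\tfrac12)$ with $[N(i+\tfrac12)-M_i,\,P_{i+n}-P_i]=\tfrac12(A_i^+-A_i^-)$. *)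

(* Defs.v *)
From HB Require Import structures.
From mathcomp Require Import all_boot all_order all_algebra.
Set Implicit Arguments. Unset Strict Implicit. Unset Printing Implicit Defensive.
Import Order.TTheory GRing.Theory Num.Theory.
Local Open Scope ring_scope.

Section Plane.
Variable R : realFieldType.
Local Notation pt := (R * R)%type.

Definition cross (p q : pt) : R := p.1 * q.2 - p.2 * q.1.
Definition padd (p q : pt) : pt := (p.1 + q.1, p.2 + q.2).
Definition psub (p q : pt) : pt := (p.1 - q.1, p.2 - q.2).
Definition pscale (a : R) (p : pt) : pt := (a * p.1, a * p.2).

(* area of the closed polygon with vertex list s (shoelace formula) *)
Definition polyArea (s : seq pt) : R :=
  (\sum_(pq <- zip s (rot 1 s)) cross pq.1 pq.2) / 2%:R.

(* polygon given by P : nat -> pt, indices taken mod 2n *)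
Definition edge (P : nat -> pt) (k : nat) : pt := psub (P k.+1) (P k).

Definition is_CPOS (n : nat) (P : nat -> pt) : Prop :=
  (2 <= n)%N /\ (forall k, P (k + 2 * n)%N = P k) /\
  [/\
      (* bounds a convex region: every vertex lies weakly left of every side *)
      (forall k j, 0 <= cross (edge P k) (psub (P j) (P k))),
      (forall k, cross (edge P k) (edge P k.+1) != 0),
      (forall k, cross (edge P (k + n)%N) (edge P k) = 0) &
      (* positive orientation *)
      (forall k j, (1 <= k)%N -> (k < j)%N -> (j <= n)%N ->
         0 < cross (edge P k) (edge P j))].

Definition midM (n : nat) (P : nat -> pt) (i : nat) : pt :=
  pscale (1 / 2%:R) (padd (P i) (P (i + n)%N)).

Definition Aplus (n : nat) (P : nat -> pt) (i : nat) : R :=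
  polyArea [seq P k | k <- iota i n.+1].
Definition Aminus (n : nat) (P : nat -> pt) (i : nat) : R :=
  polyArea [seq P k | k <- iota (i + n) n.+1].

(* N is the point N(i+1/2): on the mid-parallel line m(i+1/2), with the
   prescribed determinant *)
Definition is_N (n : nat) (P : nat -> pt) (i : nat) (N : pt) : Prop :=
  (exists t : R, N = padd (midM n P i) (pscale t (edge P i))) /\
  cross (psub N (midM n P i)) (psub (P (i + n)%N) (P i))
    = (Aplus n P i - Aminus n P i) / 2%:R.

End Plane.

(* Main.v *)
Require Import Defs.
From HB Require Import structures.
From mathcomp Require Import all_boot all_order all_algebra.
From mathcomp Require Import ring lra zify.
Import Order.TTheory GRing.Theory Num.Theory.
Local Open Scope ring_scope.

Section H.
Variable R : realFieldType.
Local Notation pt := (R * R)%type.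

Fixpoint pathS (x : pt) (s : seq pt) : R :=
  match s with [::] => 0 | y :: s' => cross x y + pathS y s' end.

Lemma sum_zip_rcons x s y :
  \sum_(pq <- zip (x :: s) (rcons s y)) cross pq.1 pq.2 = pathS x s + cross (last x s) y.
Proof.
elim: s x => [|z s IH] x /=; first by rewrite big_cons big_nil add0r addr0.
by rewrite big_cons IH /= addrA.
Qed.

Lemma area_cons x s : polyArea (x :: s) = (pathS x s + cross (last x s) x) / 2%:R.
Proof. by rewrite /polyArea rot1_cons sum_zip_rcons. Qed.

Lemma pathS_rcons x s y : pathS x (rcons s y) = pathS x s + cross (last x s) y.
Proof. elim: s x => [|z s IH] x /=; first by rewrite addr0 add0r. by rewrite IH addrA. Qed.

Lemma last_map_iota (P : nat -> pt) a m : last (P a) (map P (iota a.+1 m)) = P (a + m)%N.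
Proof. elim: m a => [|m IH] a; first by rewrite addn0. by rewrite [iota _ _]/= [map _ _]/= [last _ _]/= IH addSnnS. Qed.

Lemma cross_sum (P : nat -> pt) (a : pt) i m :
  cross a (psub (P (i + m)%N) (P i)) = \sum_(j < m) cross a (edge P (i + j)).
Proof.
elim: m => [|m IH]; first by rewrite big_ord0 addn0 /cross /psub /=; ring.
rewrite big_ord_recr /= -IH /cross /psub /edge addnS /=; ring.
Qed.

Lemma plucker (a b x y : pt) : cross a b = 0 ->
  cross a x * cross b y = cross b x * cross a y.
Proof.
move=> h; apply/eqP; rewrite -subr_eq0; apply/eqP.
have ->: cross a x * cross b y - cross b x * cross a y = cross a b * cross x y
  by rewrite /cross; ring.
by rewrite h mul0r.
Qed.
End H.
Lemma cross_psubC (R : realFieldType) (a p q : R * R) :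
  cross a (psub p q) = - cross a (psub q p).
Proof. rewrite /cross /psub /=; ring. Qed.

Lemma cross_anti (R : realFieldType) (a b : R * R) : cross a b = - cross b a.
Proof. rewrite /cross; ring. Qed.

Lemma key (R : realFieldType) n (P : nat -> R * R) : is_CPOS n P ->
  forall i, (1 <= i <= n)%N -> 0 < cross (edge P i) (psub (P (i+n)%N) (P i)).
Proof.
move=> [n2 [per [conv adj opp ori]]].
elim/ltn_ind => i IH /andP[i1 iN].
rewrite cross_sum.
have f_ge0 : forall j, (j < n)%N -> 0 <= cross (edge P i) (edge P (i + j)).
  move=> j jn.
  case: (leqP (i + j) n) => hij.
    case: j hij jn => [|j] hij jn.
      by rewrite addn0 /cross mulrC subrr.
    apply/ltW/ori => //; lia.
  pose k := (i + j - n)%N.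
  have k1 : (1 <= k <= n)%N by rewrite /k; lia.
  have ki : (k < i)%N by rewrite /k; lia.
  have ck := IH k ki k1.
  have -> : (i + j = k + n)%N by rewrite /k; lia.
  have pl := @plucker R _ _ (edge P i) (psub (P (k + n)%N) (P k)) (opp k).
  have cv := conv (k + n)%N k.
  have E : cross (edge P (k + n)) (psub (P (k + n)%N) (P k)) = - cross (edge P (k + n)) (psub (P k) (P (k + n)%N)) by apply: cross_psubC.
  rewrite E in pl.
  rewrite cross_anti.
  have hA : 0 < cross (edge P k) (edge P i) by apply: ori; lia.
  set X := cross (edge P (k + n)) (edge P i) in pl *.
  set c := cross (edge P k) (psub (P (k + n)%N) (P k)) in pl ck *.
  set A := cross (edge P k) (edge P i) in pl hA *.
  set C := cross (edge P (k + n)) (psub (P k) (P (k + n)%N)) in pl cv *.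
  clearbody X c A C. move: pl cv ck hA. clear. nra.
have n1 : (1 < n)%N by [].
rewrite (bigD1 (Ordinal n1)) //=.
have h1 : 0 < cross (edge P i) (edge P (i + 1)).
  by rewrite lt0r addn1 adj /= -addn1 f_ge0.
apply: ltr_wpDr => //.
by apply: sumr_ge0 => j _; apply: f_ge0.
Qed.

Lemma per_mul (R : realFieldType) n (P : nat -> R * R) :
  (forall k, P (k + 2 * n)%N = P k) -> forall q k, P (k + q * (2 * n))%N = P k.
Proof.
move=> per; elim=> [|q IH] k; first by rewrite mul0n addn0.
by rewrite mulSn addnA IH per.
Qed.

Arguments per_mul {R n P}.

Lemma cnz (R : realFieldType) n (P : nat -> R * R) : is_CPOS n P ->
  forall i, cross (edge P i) (psub (P (n+i)%N) (P i)) != 0.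
Proof.
move=> H i; have K := @key R n P H.
case: H => [n2 [per [conv adj opp ori]]].
have pm := per_mul per.
have [i' [hi' Pi]] : exists i', (1 <= i' <= 2 * n)%N /\ forall t, P (i + t)%N = P (i' + t)%N.
  have dq := divn_eq i (2 * n).
  case: (posnP (i %% (2 * n))) => r0.
    exists (2 * n)%N; split; first by lia.
    move=> t; rewrite dq r0 addn0 [(_ * _ + t)%N]addnC pm.
    by rewrite [(2 * n + t)%N]addnC per.
  exists (i %% (2 * n))%N; split.
    by apply/andP; split; [lia| apply/ltnW; rewrite ltn_mod; lia].
  by move=> t; rewrite {1}dq -addnA [(_ * _ + _)%N]addnC pm.
have e0 := Pi 0%N; have e1 := Pi 1%N; have en := Pi n.
rewrite !addn0 !addn1 in e0 e1.
rewrite /edge e0 e1 addnC en -/(edge P i').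
case: (leqP i' n) => hn.
  by rewrite lt0r_neq0 // K //; lia.
pose k := (i' - n)%N.
have k1 : (1 <= k <= n)%N by rewrite /k; lia.
have -> : i' = (k + n)%N by rewrite /k; lia.
have -> : (k + n + n = k + 2 * n)%N by lia.
rewrite per.
have ck := K k k1.
have pl := @plucker R _ _ (psub (P k) (P (k + n)%N)) (edge P (k + n).+1) (opp k).
apply/negP => /eqP h0; rewrite h0 mul0r in pl.
have a := adj (k + n)%N.
move: pl; rewrite cross_psubC => /esym /eqP; rewrite mulf_eq0 oppr_eq0.
by rewrite (negbTE a) orbF; apply/negP; rewrite gt_eqF.
Qed.

Theorem mainTheorem10 (R : realFieldType) (n : nat) (P : nat -> R * R)
    (i : nat) (N P' : R * R) :
  is_CPOS n P ->
  is_N n P i N ->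
  (* P' lies on the line through P_i and N *)
  (exists u : R, P' = padd (P i) (pscale u (psub N (P i)))) ->
  (* P' lies on the segment [P_{n+i}, P_{n+i+1}] *)
  (exists2 s : R, 0 <= s <= 1 &
     P' = padd (pscale (1 - s) (P (n + i)%N)) (pscale s (P (n + i).+1))) ->
  N = pscale (1 / 2%:R) (padd (P i) P') /\
  polyArea (rcons [seq P k | k <- iota i n.+1] P')
    = polyArea (P' :: [seq P k | k <- iota (n + i).+1 n]).
Proof.
move=> H [[t hN] hN2] [u hu] [s _ hs].
have cz := @cnz R n P H i.
case: H => [n2 [per [conv adj opp ori]]].
have op := opp i; rewrite addnC in op.
rewrite /midM /Aplus /Aminus ![(i + n)%N]addnC in hN hN2.
set c := cross (edge P i) (psub (P (n + i)%N) (P i)) in cz.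
have E1 : cross (edge P i) (psub P' (P i)) = u * c / 2%:R.
  by rewrite hu hN /c /cross /psub /padd /pscale /edge /=; field.
have E2 : cross (edge P i) (psub P' (P i)) = c.
  have -> : cross (edge P i) (psub P' (P i)) = c - s * cross (edge P (n + i)) (edge P i)
    by rewrite hs /c /cross /psub /padd /pscale /edge /=; ring.
  by rewrite op mulr0 subr0.
have hu2 : u = 2%:R.
  apply/eqP; rewrite -subr_eq0; apply/eqP; apply: (mulIf cz); rewrite mul0r.
  move: E1; rewrite E2 => E; lra.
have hNm : N = pscale (1 / 2%:R) (padd (P i) P').
  case: N {hN hN2} hu => [N1 N2] hu.
  by rewrite hu hu2 /pscale /padd /psub /=; congr pair; field.
split => //.
have hI : forall a, iota a.+1 n = a.+1 :: iota a.+2 n.-1.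
  by move=> a; case: n n2 {per conv adj opp ori op hN hN2 hs cz c E1 E2}.
have eL : ((n + i).+1 + n.-1 = i + 2 * n)%N by lia.
have hL1 : rcons [seq P k | k <- iota i n.+1] P' = P i :: rcons [seq P k | k <- iota i.+1 n] P' by [].
have hL2 : [seq P k | k <- iota i n.+1] = P i :: [seq P k | k <- iota i.+1 n] by [].
have hL3 : [seq P k | k <- iota (n + i) n.+1] = P (n + i)%N :: [seq P k | k <- iota (n + i).+1 n] by [].
rewrite hL2 hL3 !area_cons !last_map_iota [iota (n + i).+1 n]hI /= in hN2.
have eL2 : (n + i + n = i + 2 * n)%N by lia.
rewrite eL2 per in hN2.
rewrite hL1 !area_cons pathS_rcons last_rcons last_map_iota [iota (n + i).+1 n]hI /= last_map_iota eL per.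
rewrite [(i + n)%N]addnC in hN2 *.
set S1 := pathS _ _ in hN2 *.
set S2 := pathS _ _ in hN2 *.
clearbody S1 S2.
move: hN2; rewrite hNm hs /cross /psub /padd /pscale /=.
move=> h; lra.
Qed.
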